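(* Let $L>0$, $T>0$, $K,M$ positive integers, $\Delta x=L/K$, $\Delta t=T/M$. Let $(E,N,V)$ be a sufficiently smooth solution of the periodic Zakharov system $\mathrm{i}E_t+E_{xx}=NE$, $N_t=V_{xx}$, $V_t=N+|E|^2$, $V(0,0)=0$ ($L$-periodic in $x$, $\int_0^LN_t(0,x)\,\mathrm{d}x=0$), and let $(E^{(m)},N^{(m)},V^{(m)})$, $m=0,\dots,M$, solve the DVDM scheme $$\begin{cases}\mathrm{i}\,\delta_t^+E^{(m)}_k=-\delta_x^{\langle 2\rangle}\mu_t^+E^{(m)}_k+(\mu_t^+N^{(m)}_k)(\mu_t^+E^{(m)}_k),\\ \delta_t^+N^{(m)}_k=\delta_x^{\langle 2\rangle}\mu_t^+V^{(m)}_k,\\ \delta_t^+V^{(m)}_k=\mu_t^+N^{(m)}_k+\mu_t^+|E^{(m)}_k|^2,\end{cases}$$ with $E^{(0)}_k=E(0,k\Delta x)$, $N^{(0)}_k=N(0,k\Delta x)$, $|V^{(0)}_k-V(0,k\Delta x)|\le C_V(\Delta x)^2$ ($C_V$ independent of $\Delta x$), and let $\Delta x$ be sufficiently small. Define $A^{(m)}:=\langle e_N^{(m)}+\tilde N^{(m)},|e_E^{(m)}|^2\rangle+2\,\mathrm{Re}\langle e_E^{(m)},\tilde E^{(m)}e_N^{(m)}\rangle$. Then for $m=0,\dots,M$, $$|A^{(m)}|\le\tfrac32\|e_N^{(m)}\|^2+C_4\|e_E^{(m)}\|^2$$ for a constant $C_4>0$ not depending on $\Delta t$ and $\Delta x$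.
   Context: Grid functions are $K$-periodic in $k$. Operators: $\delta_x^{\langle 2\rangle}u_k=(u_{k+1}-2u_k+u_{k-1})/(\Delta x)^2$, $\delta_t^+u^{(m)}=(u^{(m+1)}-u^{(m)})/\Delta t$, $\mu_t^+u^{(m)}=(u^{(m+1)}+u^{(m)})/2$. Inner product $\langle v,w\rangle=\sum_{k=1}^Kv_k\bar w_k\Delta x$, norm $\|v\|=\langle v,v\rangle^{1/2}$. Products and $|\cdot|^2$ of grid functions are componentwise. $\tilde E^{(m)}_k=E(m\Delta t,k\Delta x)$, $\tilde N^{(m)}_k=N(m\Delta t,k\Delta x)$; $e_E^{(m)}=E^{(m)}-\tilde E^{(m)}$, $e_N^{(m)}=N^{(m)}-\tilde N^{(m)}$. *)

(* Defs.v *)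
From Stdlib Require Import Reals ZArith.
From Coquelicot Require Import Coquelicot.
Open Scope R_scope.

Definition pd (i j : nat) (f : R -> R -> R) : R -> R -> R :=
  fun t x => Derive_n (fun s => Derive_n (fun y => f s y) j x) i t.

(** "Sufficiently smooth": all mixed partials d_t^i d_x^j exist everywhere
    and are jointly continuous (C^infinity on R x R). *)
Definition smooth2 (f : R -> R -> R) : Prop :=
  forall i j : nat,
    (forall t x, ex_derive (fun y => pd 0 j f t y) x) /\
    (forall t x, ex_derive (fun s => pd i j f s x) t) /\
    (forall t x, continuity_2d_pt (pd i j f) t x).

Definition reE (E : R -> R -> C) : R -> R -> R := fun t x => Re (E t x).
Definition imE (E : R -> R -> C) : R -> R -> R := fun t x => Im (E t x).

Definition cpd (i j : nat) (E : R -> R -> C) : R -> R -> C :=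
  fun t x => (pd i j (reE E) t x, pd i j (imE E) t x).

Definition periodic_grid {A : Type} (K : nat) (u : Z -> A) : Prop :=
  forall k : Z, u (k + Z.of_nat K)%Z = u k.

Definition ip (K : nat) (dx : R) (v w : Z -> C) : C :=
  Cmult (sum_n_m (fun k : nat => Cmult (v (Z.of_nat k)) (Cconj (w (Z.of_nat k)))) 1 K)
        (RtoC dx).

Definition gnorm (K : nat) (dx : R) (v : Z -> C) : R := sqrt (Re (ip K dx v v)).

Definition cgrid (u : Z -> R) : Z -> C := fun k => RtoC (u k).

Definition d2x (dx : R) (u : Z -> C) : Z -> C :=
  fun k => Cdiv (Cplus (Cminus (u (k + 1)%Z) (Cmult (RtoC 2) (u k))) (u (k - 1)%Z))
                (RtoC (dx ^ 2)).

Definition d2xR (dx : R) (u : Z -> R) : Z -> R :=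
  fun k => (u (k + 1)%Z - 2 * u k + u (k - 1)%Z) / dx ^ 2.

Definition dvdm_scheme (K M : nat) (dx dt : R)
  (Eh : nat -> Z -> C) (Nh Vh : nat -> Z -> R) : Prop :=
  (forall m, (m <= M)%nat ->
     periodic_grid K (Eh m) /\ periodic_grid K (Nh m) /\ periodic_grid K (Vh m)) /\
  (forall m k, (m < M)%nat ->
     let muE := fun j => Cdiv (Cplus (Eh (S m) j) (Eh m j)) (RtoC 2) in
     let muN := fun j => (Nh (S m) j + Nh m j) / 2 in
     let muV := fun j => (Vh (S m) j + Vh m j) / 2 in
     Cmult Ci (Cdiv (Cminus (Eh (S m) k) (Eh m k)) (RtoC dt))
       = Cplus (Copp (d2x dx muE k)) (Cmult (RtoC (muN k)) (muE k)) /\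
     (Nh (S m) k - Nh m k) / dt = d2xR dx muV k /\
     (Vh (S m) k - Vh m k) / dt
       = muN k + (Cmod (Eh (S m) k) ^ 2 + Cmod (Eh m k) ^ 2) / 2).

(** The periodic Zakharov system, classical smooth solution on [0,T]
    (E, N, V given on R x R as smooth extensions). *)
Definition zakharov_solution (L T : R) (E : R -> R -> C) (N V : R -> R -> R) : Prop :=
  smooth2 (reE E) /\ smooth2 (imE E) /\ smooth2 N /\ smooth2 V /\
  (forall t x, E t (x + L) = E t x) /\
  (forall t x, N t (x + L) = N t x) /\
  (forall t x, V t (x + L) = V t x) /\
  (forall t x, 0 <= t <= T ->
     Cplus (Cmult Ci (cpd 1 0 E t x)) (cpd 0 2 E t x) = Cmult (RtoC (N t x)) (E t x) /\
     pd 1 0 N t x = pd 0 2 V t x /\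
     pd 1 0 V t x = N t x + Cmod (E t x) ^ 2) /\
  V 0 0 = 0 /\
  RInt (fun x => pd 1 0 N 0 x) 0 L = 0.

(* Main.v *)
Require Import Defs.
From Stdlib Require Import Reals ZArith.
From Coquelicot Require Import Coquelicot.
Open Scope R_scope.
From Stdlib Require Import Lra Lia.

Fixpoint Sn (K : nat) (h : nat -> R) : R :=
  match K with O => 0 | S K' => Sn K' h + h (S K') end.
Definition SZ (K : nat) (f : Z -> R) : R := Sn K (fun n => f (Z.of_nat n)).

Lemma sum_C_fst (g : nat -> C) (K : nat) :
  fst (sum_n_m g 1 K) = Sn K (fun n => fst (g n)).
Proof.
  induction K as [|K IH].
  - rewrite sum_n_m_zero; [reflexivity|lia].
  - rewrite sum_n_Sm; [|lia]. simpl. rewrite <- IH. reflexivity.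
Qed.
Lemma sum_C_snd (g : nat -> C) (K : nat) :
  snd (sum_n_m g 1 K) = Sn K (fun n => snd (g n)).
Proof.
  induction K as [|K IH].
  - rewrite sum_n_m_zero; [reflexivity|lia].
  - rewrite sum_n_Sm; [|lia]. simpl. rewrite <- IH. reflexivity.
Qed.

Lemma Sn_ext_loc K h1 h2 : (forall n, (1 <= n <= K)%nat -> h1 n = h2 n) -> Sn K h1 = Sn K h2.
Proof.
  induction K as [|K IH]; intros H; simpl; [reflexivity|].
  rewrite IH by (intros; apply H; lia). rewrite H by lia. reflexivity.
Qed.
Lemma Sn_le_loc K h1 h2 : (forall n, (1 <= n <= K)%nat -> h1 n <= h2 n) -> Sn K h1 <= Sn K h2.
Proof.
  induction K as [|K IH]; intros H; simpl; [lra|].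
  pose proof (IH (fun n Hn => H n ltac:(lia))). pose proof (H (S K) ltac:(lia)). lra.
Qed.
Lemma Sn_plus K h1 h2 : Sn K (fun n => h1 n + h2 n) = Sn K h1 + Sn K h2.
Proof. induction K; simpl; lra. Qed.
Lemma Sn_minus K h1 h2 : Sn K (fun n => h1 n - h2 n) = Sn K h1 - Sn K h2.
Proof. induction K; simpl; lra. Qed.
Lemma Sn_scal K c h : Sn K (fun n => c * h n) = c * Sn K h.
Proof. induction K; simpl; [ring|rewrite IHK; ring]. Qed.
Lemma Sn_const K c : Sn K (fun _ => c) = INR K * c.
Proof. induction K; simpl Sn; [simpl; ring|rewrite IHK, S_INR; ring]. Qed.
Lemma Sn_tele K F : Sn K (fun n => F (S n) - F n) = F (S K) - F 1%nat.
Proof. induction K; simpl; [ring|rewrite IHK; ring]. Qed.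
Lemma Sn_abs K h : Rabs (Sn K h) <= Sn K (fun n => Rabs (h n)).
Proof.
  induction K; simpl. rewrite Rabs_R0; lra.
  eapply Rle_trans; [apply Rabs_triang|]. lra.
Qed.
Lemma Sn_nonneg K h : (forall n, (1 <= n <= K)%nat -> 0 <= h n) -> 0 <= Sn K h.
Proof. intros H. rewrite <- (Rmult_0_r (INR K)), <- Sn_const. apply Sn_le_loc. exact H. Qed.

Lemma SZ_tele_per K F : periodic_grid K F -> SZ K (fun k => F (k+1)%Z - F k) = 0.
Proof.
  intros HP. unfold SZ.
  transitivity (Sn K (fun n => (fun n => F (Z.of_nat n)) (S n) - (fun n => F (Z.of_nat n)) n)).
  - apply Sn_ext_loc. intros n _. rewrite Nat2Z.inj_succ, <- Z.add_1_r. reflexivity.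
  - rewrite (Sn_tele K (fun n => F (Z.of_nat n))). rewrite Nat2Z.inj_succ, <- Z.add_1_r, Z.add_comm, HP. simpl. ring.
Qed.

Lemma bound2d (f : R -> R -> R) a b c d :
  (forall x y, a <= x <= b -> c <= y <= d -> continuity_2d_pt f x y) ->
  exists B, forall x y, a <= x <= b -> c <= y <= d -> Rabs (f x y) <= B.
Proof.
  intros Hc.
  destruct (uniform_continuity_2d f a b c d Hc (mkposreal 1 Rlt_0_1)) as [del Hd].
  assert (Hdp : 0 < del) by apply cond_pos.
  assert (Hind : forall n : nat, forall u v, a <= u <= b -> c <= v <= d ->
     u - a <= INR n * (del/2) -> v - c <= INR n * (del/2) ->
     Rabs (f u v) <= Rabs (f a c) + INR n).
  { induction n as [|n IH]; intros u v Hu Hv Hu' Hv'.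
    - simpl in *. replace u with a by lra. replace v with c by lra. lra.
    - set (u' := Rmax a (u - del/2)). set (v' := Rmax c (v - del/2)).
      assert (Hu1 : a <= u' <= u) by (unfold u'; apply Rmax_case_strong; lra).
      assert (Hv1 : c <= v' <= v) by (unfold v'; apply Rmax_case_strong; lra).
      assert (Hu2 : u - u' <= del/2) by (unfold u'; apply Rmax_case_strong; lra).
      assert (Hv2 : v - v' <= del/2) by (unfold v'; apply Rmax_case_strong; lra).
      rewrite S_INR in *. pose proof (pos_INR n).
      assert (Hu3 : u' - a <= INR n * (del/2)) by (unfold u'; apply Rmax_case_strong; intros; nra).
      assert (Hv3 : v' - c <= INR n * (del/2)) by (unfold v'; apply Rmax_case_strong; intros; nra).
      specialize (IH u' v' ltac:(lra) ltac:(lra) Hu3 Hv3).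
      assert (H1 : Rabs (f u v - f u' v') < 1).
      { apply (Hd u' v' u v); try lra; rewrite Rabs_pos_eq; lra. }
      simpl in H1.
      pose proof (Rabs_triang (f u v - f u' v') (f u' v')).
      replace (f u v - f u' v' + f u' v') with (f u v) in H0 by ring. lra. }
  destruct (INR_archimed (del/2) (Rabs (b - a) + Rabs (d - c)) ltac:(lra)) as [n Hn].
  exists (Rabs (f a c) + INR n). intros x y Hx Hy. apply Hind; auto.
  - pose proof (Rle_abs (b-a)). pose proof (Rabs_pos (d-c)). lra.
  - pose proof (Rle_abs (d-c)). pose proof (Rabs_pos (b-a)). lra.
Qed.

Definition D2 (dx : R) (u : Z -> R) (k : Z) : R := (u (k+1)%Z - 2 * u k + u (k-1)%Z) / dx^2.
Definition mu (u1 u0 : Z -> R) (k : Z) : R := (u1 k + u0 k) / 2.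
Definition edens (dx : R) (a b N V : Z -> R) (k : Z) : R :=
  ((a (k+1)%Z - a k)/dx)^2 + ((b (k+1)%Z - b k)/dx)^2 + /2 * N k ^2
  + /2 * ((V (k+1)%Z - V k)/dx)^2 + N k * (a k ^2 + b k ^2).

Lemma per_shiftm K (u : Z -> R) k : periodic_grid K u -> u (k + Z.of_nat K - 1)%Z = u (k-1)%Z.
Proof. intros H. replace (k + Z.of_nat K - 1)%Z with ((k-1) + Z.of_nat K)%Z by ring. apply H. Qed.

Lemma step_energy K dx dt (a0 a1 b0 b1 N0 N1 V0 V1 : Z -> R) :
  dx <> 0 ->
  periodic_grid K a0 -> periodic_grid K a1 -> periodic_grid K b0 -> periodic_grid K b1 ->
  periodic_grid K V0 -> periodic_grid K V1 ->
  (forall k, a1 k - a0 k = dt * (- D2 dx (mu b1 b0) k + mu N1 N0 k * mu b1 b0 k)) ->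
  (forall k, b1 k - b0 k = dt * (D2 dx (mu a1 a0) k - mu N1 N0 k * mu a1 a0 k)) ->
  (forall k, N1 k - N0 k = dt * D2 dx (mu V1 V0) k) ->
  (forall k, V1 k - V0 k = dt * (mu N1 N0 k + (a1 k ^2 + b1 k ^2 + a0 k ^2 + b0 k ^2)/2)) ->
  SZ K (edens dx a1 b1 N1 V1) = SZ K (edens dx a0 b0 N0 V0) /\
  SZ K (fun k => a1 k ^2 + b1 k ^2) = SZ K (fun k => a0 k ^2 + b0 k ^2).
Proof.
  intros Hdx Pa0 Pa1 Pb0 Pb1 PV0 PV1 Ha Hb HN HV.
  set (G := fun k => ((a1 k - a0 k)*((a1 k + a0 k) - (a1 (k-1)%Z + a0 (k-1)%Z))
        + (b1 k - b0 k)*((b1 k + b0 k) - (b1 (k-1)%Z + b0 (k-1)%Z))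
        + /2 * (V1 k - V0 k)*((V1 k + V0 k) - (V1 (k-1)%Z + V0 (k-1)%Z))) / dx^2).
  set (Gm := fun k => 2 * dt * (mu a1 a0 k * mu b1 b0 (k-1)%Z - mu b1 b0 k * mu a1 a0 (k-1)%Z) / dx^2).
  assert (PG : periodic_grid K G).
  { intros k. unfold G. rewrite Pa0, Pa1, Pb0, Pb1, PV0, PV1.
    rewrite !(per_shiftm K) by assumption. reflexivity. }
  assert (PGm : periodic_grid K Gm).
  { intros k. unfold Gm, mu. rewrite Pa0, Pa1, Pb0, Pb1.
    rewrite !(per_shiftm K) by assumption. reflexivity. }
  split.
  - apply Rminus_diag_uniq. unfold SZ. rewrite <- Sn_minus.
    rewrite <- (SZ_tele_per K G PG). unfold SZ. apply Sn_ext_loc. intros n _.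
    set (k := Z.of_nat n).
    specialize (Ha k). specialize (Hb k). specialize (HN k). specialize (HV k).
    unfold G, edens. replace (k+1-1)%Z with k by ring.
    unfold D2, mu in *.
    apply Rminus_diag_eq in Ha. apply Rminus_diag_eq in Hb.
    apply Rminus_diag_eq in HN. apply Rminus_diag_eq in HV.
    match type of Ha with ?X = 0 => set (E1 := X) in Ha end.
    match type of Hb with ?X = 0 => set (E2 := X) in Hb end.
    match type of HN with ?X = 0 => set (E3 := X) in HN end.
    match type of HV with ?X = 0 => set (E4 := X) in HV end.
    apply Rminus_diag_uniq.
    transitivity (E1 * (-2 * ((a1 (k+1)%Z + a0 (k+1)%Z)/2 - 2 * ((a1 k + a0 k)/2) + (a1 (k-1)%Z + a0 (k-1)%Z)/2)/dx^2 + 2 * ((N1 k + N0 k)/2) * ((a1 k + a0 k)/2))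
                 + E2 * (-2 * ((b1 (k+1)%Z + b0 (k+1)%Z)/2 - 2 * ((b1 k + b0 k)/2) + (b1 (k-1)%Z + b0 (k-1)%Z)/2)/dx^2 + 2 * ((N1 k + N0 k)/2) * ((b1 k + b0 k)/2))
                 + E3 * ((N1 k + N0 k)/2 + (a1 k ^2 + b1 k ^2 + a0 k ^2 + b0 k ^2)/2)
                 + E4 * (- (((V1 (k+1)%Z + V0 (k+1)%Z)/2 - 2 * ((V1 k + V0 k)/2) + (V1 (k-1)%Z + V0 (k-1)%Z)/2)/dx^2))).
    + unfold E1, E2, E3, E4. field. exact Hdx.
    + rewrite Ha, Hb, HN, HV. ring.
  - apply Rminus_diag_uniq. unfold SZ. rewrite <- Sn_minus.
    rewrite <- (SZ_tele_per K Gm PGm). unfold SZ. apply Sn_ext_loc. intros n _.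
    set (k := Z.of_nat n).
    specialize (Ha k). specialize (Hb k).
    unfold Gm. replace (k+1-1)%Z with k by ring.
    unfold D2, mu in *.
    apply Rminus_diag_eq in Ha. apply Rminus_diag_eq in Hb.
    match type of Ha with ?X = 0 => set (E1 := X) in Ha end.
    match type of Hb with ?X = 0 => set (E2 := X) in Hb end.
    apply Rminus_diag_uniq.
    transitivity (E1 * (2 * ((a1 k + a0 k)/2)) + E2 * (2 * ((b1 k + b0 k)/2))).
    + unfold E1, E2. field. exact Hdx.
    + rewrite Ha, Hb. ring.
Qed.

Lemma Sn_mono_K m K h : (forall n, 0 <= h n) -> (m <= K)%nat -> Sn m h <= Sn K h.
Proof.
  intros H. induction K; intros Hm.
  - replace m with 0%nat by lia. lra.
  - destruct (Nat.eq_dec m (S K)) as [->|Hne]; [lra|].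
    simpl. specialize (IHK ltac:(lia)). specialize (H (S K)). lra.
Qed.

Lemma amgm x y s : 0 < s -> Rabs (x*y) <= s/2 * x^2 + /(2*s) * y^2.
Proof.
  intros Hs.
  assert (e1: s/2*x^2 + /(2*s)*y^2 - x*y = /(2*s)*(s*x-y)^2) by (field; lra).
  assert (e2: s/2*x^2 + /(2*s)*y^2 + x*y = /(2*s)*(s*x+y)^2) by (field; lra).
  assert (h0 : 0 < /(2*s)) by (apply Rinv_0_lt_compat; lra).
  pose proof (Rmult_le_pos _ _ (Rlt_le _ _ h0) (pow2_ge_0 (s*x-y))).
  pose proof (Rmult_le_pos _ _ (Rlt_le _ _ h0) (pow2_ge_0 (s*x+y))).
  apply Rabs_le. lra.
Qed.

Lemma pt_sob a1 b1 a0 b0 eta dx : 0 < eta -> 0 < dx ->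
  Rabs ((a1^2 + b1^2) - (a0^2 + b0^2)) <=
  eta/2 * dx * (((a1 - a0)/dx)^2 + ((b1 - b0)/dx)^2) + dx/eta * ((a1^2+b1^2) + (a0^2+b0^2)).
Proof.
  intros He Hdx.
  pose proof (amgm (a1-a0) (a1+a0) (eta/dx) ltac:(apply Rdiv_lt_0_compat; lra)).
  pose proof (amgm (b1-b0) (b1+b0) (eta/dx) ltac:(apply Rdiv_lt_0_compat; lra)).
  replace ((a1^2 + b1^2) - (a0^2 + b0^2)) with ((a1-a0)*(a1+a0) + (b1-b0)*(b1+b0)) by ring.
  eapply Rle_trans; [apply Rabs_triang|].
  assert (E1 : eta/dx/2*(a1-a0)^2 = eta/2*dx*((a1-a0)/dx)^2) by (field; lra).
  assert (E2 : eta/dx/2*(b1-b0)^2 = eta/2*dx*((b1-b0)/dx)^2) by (field; lra).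
  assert (E3 : /(2*(eta/dx)) = dx/eta/2) by (field; lra).
  rewrite E1, E3 in H. rewrite E2, E3 in H0.
  assert (dx/eta/2*(a1+a0)^2 <= dx/eta*(a1^2+a0^2)).
  { assert (0 < dx/eta) by (apply Rdiv_lt_0_compat; lra).
    assert ((a1+a0)^2 <= 2*(a1^2+a0^2)) by (pose proof (pow2_ge_0 (a1-a0)); nra).
    replace (dx/eta/2*(a1+a0)^2) with (dx/eta*((a1+a0)^2/2)) by (field; lra).
    apply Rmult_le_compat_l; lra. }
  assert (dx/eta/2*(b1+b0)^2 <= dx/eta*(b1^2+b0^2)).
  { assert (0 < dx/eta) by (apply Rdiv_lt_0_compat; lra).
    assert ((b1+b0)^2 <= 2*(b1^2+b0^2)) by (pose proof (pow2_ge_0 (b1-b0)); nra).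
    replace (dx/eta/2*(b1+b0)^2) with (dx/eta*((b1+b0)^2/2)) by (field; lra).
    apply Rmult_le_compat_l; lra. }
  lra.
Qed.

Definition gg (a b : Z -> R) (k : Z) := a k ^2 + b k ^2.
Definition dd (dx : R) (a b : Z -> R) (k : Z) := ((a (k+1)%Z - a k)/dx)^2 + ((b (k+1)%Z - b k)/dx)^2.

Lemma SZ_shift1 K f : periodic_grid K f -> SZ K (fun k => f (k+1)%Z) = SZ K f.
Proof.
  intros H. pose proof (SZ_tele_per K f H). unfold SZ in *.
  rewrite Sn_minus in H0. lra.
Qed.

Lemma sobolev K dx a b eta : (0 < K)%nat -> 0 < dx -> 0 < eta ->
  periodic_grid K a -> periodic_grid K b ->
  forall n, (1 <= n <= K)%nat ->
  gg a b (Z.of_nat n) <= SZ K (gg a b) / INR K + eta * dx * SZ K (dd dx a b) + 4 * dx / eta * SZ K (gg a b).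
Proof.
  intros HK Hdx He Pa Pb.
  set (g := gg a b). set (P := SZ K g). set (Q := SZ K (dd dx a b)).
  set (St := SZ K (fun k => Rabs (g (k+1)%Z - g k))).
  assert (Hg0 : forall k, 0 <= g k) by (intros; unfold g, gg; nra).
  assert (HSt : St <= eta/2*dx*Q + 2*(dx/eta)*P).
  { assert (Pg : periodic_grid K g) by (intros k; unfold g, gg; rewrite Pa, Pb; reflexivity).
    pose proof (SZ_shift1 K g Pg) as Hsh.
    unfold St, SZ. eapply Rle_trans.
    apply Sn_le_loc with (h2 := fun n => eta/2*dx * dd dx a b (Z.of_nat n) + dx/eta * (g (Z.of_nat n + 1)%Z + g (Z.of_nat n))).
    { intros n _. unfold g, gg, dd. apply pt_sob; assumption. }
    rewrite Sn_plus, Sn_scal, Sn_scal, Sn_plus. fold (SZ K g). unfold SZ in Hsh. rewrite Hsh.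
    fold (SZ K (dd dx a b)). fold Q. fold P. change (Sn K (fun n : nat => g (Z.of_nat n))) with P. lra. }
  assert (HSt0 : 0 <= St) by (apply Sn_nonneg; intros; apply Rabs_pos).
  assert (H1 : forall n, (1 <= n <= K)%nat -> Rabs (g (Z.of_nat n) - g 1%Z) <= St).
  { intros n Hn.
    assert (Ht := Sn_tele (n-1) (fun i => g (Z.of_nat i))). cbv beta in Ht.
    replace (S (n-1)) with n in Ht by lia. change (Z.of_nat 1) with 1%Z in Ht. rewrite <- Ht.
    eapply Rle_trans; [apply Sn_abs|].
    unfold St, SZ. eapply Rle_trans; [apply Sn_mono_K with (K := K)|].
    - intros; apply Rabs_pos.
    - lia.
    - right. apply Sn_ext_loc. intros i _. rewrite Nat2Z.inj_succ, <- Z.add_1_r. reflexivity. }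
  intros n Hn.
  assert (H2 : forall m, (1 <= m <= K)%nat -> g (Z.of_nat n) <= g (Z.of_nat m) + 2 * St).
  { intros m Hm. pose proof (H1 n Hn). pose proof (H1 m Hm).
    apply Rabs_le_between in H. apply Rabs_le_between in H0. lra. }
  assert (H3 : INR K * g (Z.of_nat n) <= P + INR K * (2 * St)).
  { rewrite <- !Sn_const. unfold P, SZ. rewrite <- Sn_plus. apply Sn_le_loc. exact H2. }
  assert (HKp : 0 < INR K) by (apply lt_0_INR; lia).
  assert (g (Z.of_nat n) <= P / INR K + 2 * St).
  { apply (Rmult_le_reg_l (INR K)); [lra|]. field_simplify; [|lra]. lra. }
  fold g. fold P. fold Q. 
  assert (0 <= dx/eta*P). { apply Rmult_le_pos. apply Rlt_le, Rdiv_lt_0_compat; lra. unfold P. apply Sn_nonneg. intros; apply Hg0. }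
  replace (4*dx/eta*P) with (4*(dx/eta*P)) by (field; lra). lra.
Qed.

Lemma energy_lower K dx a b N V Gm : 0 < dx ->
  (forall n, (1 <= n <= K)%nat -> gg a b (Z.of_nat n) <= Gm) ->
  SZ K (dd dx a b) <= SZ K (edens dx a b N V) + /2 * Gm * SZ K (gg a b).
Proof.
  intros Hdx HG. unfold SZ. rewrite <- Sn_scal, <- Sn_plus. apply Sn_le_loc.
  intros n Hn. specialize (HG n Hn). unfold edens, dd, gg in *.
  set (k := Z.of_nat n) in *.
  set (g := a k ^2 + b k ^2) in *.
  assert (0 <= g) by (unfold g; nra).
  assert (g * g <= Gm * g) by nra.
  pose proof (pow2_ge_0 (N k + g)).
  pose proof (pow2_ge_0 ((V (k+1)%Z - V k)/dx)).
  nra.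
Qed.

Lemma gmax K dx a b N V Pb Hb : (0 < K)%nat -> 0 < dx ->
  periodic_grid K a -> periodic_grid K b ->
  dx * SZ K (gg a b) <= Pb -> dx * SZ K (edens dx a b N V) <= Hb ->
  forall n, (1 <= n <= K)%nat ->
  gg a b (Z.of_nat n) <= Pb/(dx * INR K) + 2*Hb + Pb^2/(dx*INR K) + 4*Pb^2*(Pb+1) + 4*Pb*(Pb+1).
Proof.
  intros HK Hdx Pa Pbb HP HH n Hn.
  set (L := dx * INR K).
  assert (HL : 0 < L) by (unfold L; apply Rmult_lt_0_compat; [lra|apply lt_0_INR; lia]).
  set (P := SZ K (gg a b)). set (Q := SZ K (dd dx a b)). set (H := SZ K (edens dx a b N V)).
  fold P H in HP, HH.
  assert (P0 : 0 <= P) by (unfold P, SZ; apply Sn_nonneg; intros; unfold gg; pose proof (pow2_ge_0 (a (Z.of_nat n0))); pose proof (pow2_ge_0 (b (Z.of_nat n0))); lra).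
  assert (Q0 : 0 <= Q) by (unfold Q, SZ; apply Sn_nonneg; intros; unfold dd; match goal with |- 0 <= ?x ^2 + ?y ^2 => pose proof (pow2_ge_0 x); pose proof (pow2_ge_0 y) end; lra).
  set (Ps := dx * P). set (Qs := dx * Q).
  assert (Ps0 : 0 <= Ps) by (unfold Ps; nra). assert (Qs0 : 0 <= Qs) by (unfold Qs; nra).
  set (eta := / (Ps + 1)).
  assert (He : 0 < eta) by (unfold eta; apply Rinv_0_lt_compat; lra).
  assert (He1 : eta <= 1) by (unfold eta; rewrite <- Rinv_1; apply Rinv_le_contravar; lra).
  assert (HePs : eta * Ps <= 1) by (unfold eta; apply (Rmult_le_reg_l (Ps+1)); [lra|]; field_simplify; lra).
  set (Gm := Ps/L + eta*Qs + 4*Ps*(Ps+1)).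
  assert (Hsob : forall m, (1 <= m <= K)%nat -> gg a b (Z.of_nat m) <= Gm).
  { intros m Hm. pose proof (sobolev K dx a b eta HK Hdx He Pa Pbb m Hm) as S1.
    fold P Q in S1. unfold Gm, Ps, Qs, L.
    replace (P / INR K) with (dx*P/(dx*INR K)) in S1 by (field; split; [apply not_0_INR; lia| lra]).
    assert (HPs1 : dx*P+1 <> 0) by (pose proof Ps0 as Z0; unfold Ps in Z0; lra).
    replace (4*dx/eta*P) with (4*(dx*P)*(dx*P+1)) in S1 by (unfold eta, Ps; field; auto).
    fold Ps in S1 |- *. fold Qs in S1 |- *.
    unfold Qs. rewrite <- Rmult_assoc. exact S1. }
  pose proof (energy_lower K dx a b N V Gm Hdx Hsob) as EL. fold Q H P in EL.
  assert (EL2 : Qs <= dx * H + /2 * Gm * Ps) by (unfold Qs, Ps; nra).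
  assert (Hq : Qs <= 2 * (dx*H) + Ps^2/L + 4*Ps^2*(Ps+1)).
  { unfold Gm in EL2.
    assert (eta*Qs*Ps <= Qs) by nra.
    replace (Ps^2/L) with (Ps*(Ps/L)) by (field; lra). nra. }
  pose proof (Hsob n Hn). unfold Gm in H0.
  assert (eta * Qs <= Qs) by nra.
  assert (Ps <= Pb) by (unfold Ps; lra).
  assert (Ps/L <= Pb/L) by (apply Rmult_le_compat_r; [apply Rlt_le, Rinv_0_lt_compat; lra| lra]).
  assert (Ps^2/L <= Pb^2/L) by (apply Rmult_le_compat_r; [apply Rlt_le, Rinv_0_lt_compat; lra| nra]).
  assert (Ps^2*(Ps+1) <= Pb^2*(Pb+1)).
  { assert (Ps^2 <= Pb^2) by nra. apply Rmult_le_compat; nra. }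
  assert (Ps*(Ps+1) <= Pb*(Pb+1)) by nra.
  lra.
Qed.

Lemma Cdiv_R (z : C) r : r <> 0 -> Cdiv z (RtoC r) = (fst z / r, snd z / r).
Proof. intros Hr. destruct z as [x y]. unfold Cdiv, Cmult, Cinv, RtoC; simpl. f_equal; field; auto. Qed.

Lemma decodeE dx dt (E1 E0 : Z -> C) (N1 N0 : Z -> R) k : dt <> 0 -> dx <> 0 ->
  let muE := fun j => Cdiv (Cplus (E1 j) (E0 j)) (RtoC 2) in
  let muN := fun j => (N1 j + N0 j) / 2 in
  Cmult Ci (Cdiv (Cminus (E1 k) (E0 k)) (RtoC dt))
       = Cplus (Copp (d2x dx muE k)) (Cmult (RtoC (muN k)) (muE k)) ->
  fst (E1 k) - fst (E0 k) = dt * (- D2 dx (mu (fun j => snd (E1 j)) (fun j => snd (E0 j))) k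
      + mu N1 N0 k * mu (fun j => snd (E1 j)) (fun j => snd (E0 j)) k) /\
  snd (E1 k) - snd (E0 k) = dt * (D2 dx (mu (fun j => fst (E1 j)) (fun j => fst (E0 j))) k
      - mu N1 N0 k * mu (fun j => fst (E1 j)) (fun j => fst (E0 j)) k).
Proof.
  intros Hdt Hdx muE muN H. unfold muE, muN, d2x in H. unfold D2, mu.
  rewrite !Cdiv_R in H by (try apply pow_nonzero; auto; lra).
  destruct (E1 k) as [x1 y1]. destruct (E0 k) as [x0 y0].
  destruct (E1 (k+1)%Z) as [x1p y1p]. destruct (E0 (k+1)%Z) as [x0p y0p].
  destruct (E1 (k-1)%Z) as [x1m y1m]. destruct (E0 (k-1)%Z) as [x0m y0m].
  simpl in *.
  unfold Cmult, Cminus, Cplus, Copp, RtoC, Ci in H. simpl in H.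
  injection H as H1 H2.
  split.
  - match goal with |- _ = dt * ?Z => assert (e : (x1 + - x0)/dt = Z) by lra end.
    rewrite <- e. field. auto.
  - match goal with |- _ = dt * ?Z => assert (e : (y1 + - y0)/dt = Z) by lra end.
    rewrite <- e. field. auto.
Qed.

Lemma cont_of_smooth f : smooth2 f -> forall t x, continuity_2d_pt f t x.
Proof. intros H t x. destruct (H 0%nat 0%nat) as (_ & _ & H3). exact (H3 t x). Qed.

Lemma contd_of_smooth f : smooth2 f -> forall t x, continuity_2d_pt (pd 0 1 f) t x.
Proof. intros H t x. destruct (H 0%nat 1%nat) as (_ & _ & H3). exact (H3 t x). Qed.

Lemma lip_smooth f c d D : smooth2 f ->
  (forall y, c <= y <= d -> Rabs (pd 0 1 f 0 y) <= D) ->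
  forall y1 y2, c <= y1 -> y1 <= y2 -> y2 <= d -> Rabs (f 0 y2 - f 0 y1) <= D * (y2 - y1).
Proof.
  intros H HD y1 y2 H1 H2 H3.
  destruct (Req_dec y1 y2) as [<-|Hne].
  - rewrite Rminus_diag, Rabs_R0. lra.
  - destruct (H 0%nat 0%nat) as (H0 & _ & _).
    destruct (MVT_cor2 (fun y => f 0 y) (fun y => pd 0 1 f 0 y) y1 y2 ltac:(lra)) as [c0 [Hc Hc2]].
    { intros c1 Hc1. apply is_derive_Reals.
      pose proof (Derive_correct _ _ (H0 0 c1)) as HH. exact HH. }
    rewrite Hc, Rabs_mult, (Rabs_pos_eq (y2 - y1)) by lra.
    apply Rmult_le_compat_r; [lra|]. apply HD; lra.
Qed.

Lemma Cmod_sq (z : C) : Cmod z ^ 2 = fst z ^2 + snd z ^2.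
Proof. unfold Cmod. rewrite pow2_sqrt; [reflexivity|]. pose proof (pow2_ge_0 (fst z)); pose proof (pow2_ge_0 (snd z)); lra. Qed.

Lemma ip_fst K dx v w : fst (ip K dx v w) = dx * SZ K (fun k => fst (v k) * fst (w k) + snd (v k) * snd (w k)).
Proof.
  unfold ip. simpl. rewrite sum_C_fst, sum_C_snd. unfold SZ. rewrite Rmult_comm.
  replace (Sn K (fun n : nat => snd (v (Z.of_nat n) * Cconj (w (Z.of_nat n)))%C) * 0) with 0 by ring.
  rewrite Rminus_0_r. f_equal. apply Sn_ext_loc. intros n _. simpl. ring.
Qed.

Lemma ip_snd K dx v w : snd (ip K dx v w) = dx * SZ K (fun k => snd (v k) * fst (w k) - fst (v k) * snd (w k)).
Proof.
  unfold ip. simpl. rewrite sum_C_fst, sum_C_snd. unfold SZ.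
  replace (Sn K (fun n : nat => fst (v (Z.of_nat n) * Cconj (w (Z.of_nat n)))%C) * 0) with 0 by ring.
  rewrite Rplus_0_l, Rmult_comm. f_equal. apply Sn_ext_loc. intros n _. simpl. ring.
Qed.

Lemma sq_le x B : Rabs x <= B -> x^2 <= B^2.
Proof.
  intros H. pose proof (Rabs_pos x).
  replace (x^2) with (Rabs x ^2) by (rewrite RPow_abs; apply Rabs_pos_eq; apply pow2_ge_0).
  nra.
Qed.

Lemma div_sq_le u D dx : 0 < dx -> Rabs u <= D * dx -> (u/dx)^2 <= D^2.
Proof.
  intros Hdx H. apply sq_le. unfold Rdiv. rewrite Rabs_mult, Rabs_inv, (Rabs_pos_eq dx) by lra.
  apply (Rmult_le_reg_r dx); [lra|]. rewrite Rmult_assoc, Rinv_l by lra. lra.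
Qed.

Lemma final_pt ex ey p q n Nt B2 BE2 BN : ex^2+ey^2 <= B2 -> p^2+q^2 <= BE2 -> Rabs Nt <= BN ->
  Rabs ((n + Nt)*(ex^2+ey^2) + 2*(n*(ex*p + ey*q))) <= 3/2*n^2 + (B2/2 + BN + BE2 + 1)*(ex^2 + ey^2).
Proof.
  intros H1 H2 H3.
  set (g := ex^2+ey^2) in *.
  assert (g0 : 0 <= g) by (unfold g; nra).
  assert (T1 : Rabs (n*g) <= n^2/2 + B2/2*g).
  { rewrite Rabs_mult, (Rabs_pos_eq g) by lra.
    pose proof (pow2_ge_0 (Rabs n - g)). pose proof (Rabs_pos n).
    assert (Rabs n ^2 = n^2) by (rewrite RPow_abs; apply Rabs_pos_eq; apply pow2_ge_0).
    nra. }
  assert (T2 : Rabs (Nt*g) <= BN*g).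
  { rewrite Rabs_mult, (Rabs_pos_eq g) by lra. nra. }
  assert (CS : (ex*p+ey*q)^2 <= g*(p^2+q^2)).
  { unfold g. pose proof (pow2_ge_0 (ex*q - ey*p)). nra. }
  assert (T3 : Rabs (2*(n*(ex*p+ey*q))) <= n^2 + BE2*g).
  { apply Rabs_le. pose proof (pow2_ge_0 (n - (ex*p+ey*q))). pose proof (pow2_ge_0 (n + (ex*p+ey*q))).
    assert (g*(p^2+q^2) <= g*BE2) by (apply Rmult_le_compat_l; lra). nra. }
  replace ((n + Nt)*g + 2*(n*(ex*p + ey*q))) with (n*g + Nt*g + 2*(n*(ex*p+ey*q))) by ring.
  eapply Rle_trans; [apply Rabs_triang|].
  eapply Rle_trans; [apply Rplus_le_compat_r, Rabs_triang|].
  nra.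
Qed.

Theorem lemma3p8 (L T : R) (E : R -> R -> C) (N V : R -> R -> R) (CV : R) :
  0 < L -> 0 < T ->
  zakharov_solution L T E N V ->
  exists C4 : R, exists dx0 : R, 0 < C4 /\ 0 < dx0 /\
  forall (K M : nat), (0 < K)%nat -> (0 < M)%nat ->
  let dx := L / INR K in
  let dt := T / INR M in
  dx < dx0 ->
  forall (Eh : nat -> Z -> C) (Nh Vh : nat -> Z -> R),
    dvdm_scheme K M dx dt Eh Nh Vh ->
    (forall k : Z, Eh 0%nat k = E 0 (IZR k * dx)) ->
    (forall k : Z, Nh 0%nat k = N 0 (IZR k * dx)) ->
    (forall k : Z, Rabs (Vh 0%nat k - V 0 (IZR k * dx)) <= CV * dx ^ 2) ->
    forall m : nat, (m <= M)%nat ->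
      let Et : Z -> C := fun k => E (INR m * dt) (IZR k * dx) in
      let Nt : Z -> R := fun k => N (INR m * dt) (IZR k * dx) in
      let eE : Z -> C := fun k => Cminus (Eh m k) (Et k) in
      let eN : Z -> R := fun k => Nh m k - Nt k in
      let A : C :=
        Cplus (ip K dx (cgrid (fun k => eN k + Nt k)) (fun k => RtoC (Cmod (eE k) ^ 2)))
              (RtoC (2 * Re (ip K dx eE (fun k => Cmult (Et k) (RtoC (eN k)))))) in
      Cmod A <= 3 / 2 * gnorm K dx (cgrid eN) ^ 2 + C4 * gnorm K dx eE ^ 2.
Proof.
  intros HL HT Hsol.
  destruct Hsol as (sRe & sIm & sN & sV & _ & _ & _ & _ & _ & _).
  destruct (bound2d (reE E) 0 T 0 (L+1) (fun t x _ _ => cont_of_smooth _ sRe t x)) as [BR HBR].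
  destruct (bound2d (imE E) 0 T 0 (L+1) (fun t x _ _ => cont_of_smooth _ sIm t x)) as [BI HBI].
  destruct (bound2d N 0 T 0 (L+1) (fun t x _ _ => cont_of_smooth _ sN t x)) as [BN HBN].
  destruct (bound2d (pd 0 1 (reE E)) 0 0 0 (L+1) (fun t x _ _ => contd_of_smooth _ sRe t x)) as [DR HDR].
  destruct (bound2d (pd 0 1 (imE E)) 0 0 0 (L+1) (fun t x _ _ => contd_of_smooth _ sIm t x)) as [DI HDI].
  destruct (bound2d (pd 0 1 V) 0 0 0 (L+1) (fun t x _ _ => contd_of_smooth _ sV t x)) as [DV HDV].
  assert (BN0 : 0 <= BN) by (pose proof (HBN 0 0 ltac:(lra) ltac:(lra)); pose proof (Rabs_pos (N 0 0)); lra).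
  set (BE2 := BR^2 + BI^2).
  assert (BE20 : 0 <= BE2) by (unfold BE2; nra).
  set (Pb := L * BE2).
  set (h0 := DR^2 + DI^2 + /2 * BN^2 + /2*(DV + 2*Rabs CV)^2 + BN * BE2).
  set (Hb := L * h0).
  set (G := Pb/L + 2*Hb + Pb^2/L + 4*Pb^2*(Pb+1) + 4*Pb*(Pb+1)).
  set (B2 := 2*(G + BE2)).
  assert (HG0 : 0 <= G).
  { unfold G, Hb, h0, Pb. 
    assert (0 <= L*BE2) by nra.
    assert (0 <= BN*BE2) by nra.
    assert (0 <= /2 * BN^2) by (apply Rmult_le_pos; [lra|apply pow2_ge_0]).
    assert (0 <= /2*(DV + 2*Rabs CV)^2) by (apply Rmult_le_pos; [lra|apply pow2_ge_0]).
    assert (0 <= L*BE2/L) by (apply Rmult_le_pos; [nra| apply Rlt_le, Rinv_0_lt_compat; lra]).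
    assert (0 <= (L*BE2)^2/L) by (apply Rmult_le_pos; [nra| apply Rlt_le, Rinv_0_lt_compat; lra]).
    pose proof (pow2_ge_0 DR). pose proof (pow2_ge_0 DI).
    assert (0 <= L * (DR^2 + DI^2 + /2 * BN^2 + /2*(DV + 2*Rabs CV)^2 + BN * BE2)) by (apply Rmult_le_pos; lra).
    assert (0 <= (L*BE2)^2) by apply pow2_ge_0.
    assert (0 <= 4*(L*BE2)^2*(L*BE2+1)) by (apply Rmult_le_pos; lra).
    assert (0 <= 4*(L*BE2)*(L*BE2+1)) by (apply Rmult_le_pos; lra).
    lra. }
  exists (B2/2 + BN + BE2 + 1), 1.
  split; [unfold B2; lra|]. split; [lra|].
  intros K M HK HM dx dt Hdx1 Eh Nh Vh Hsch HE0 HN0 HV0 m Hm Et Nt eE eN A.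
  assert (HKp : 0 < INR K) by (apply lt_0_INR; lia).
  assert (HMp : 0 < INR M) by (apply lt_0_INR; lia).
  assert (Hdx : 0 < dx) by (unfold dx; apply Rdiv_lt_0_compat; lra).
  assert (Hdt : 0 < dt) by (unfold dt; apply Rdiv_lt_0_compat; lra).
  assert (HdxK : dx * INR K = L) by (unfold dx; field; lra).
  destruct Hsch as [Hper Heq].
  set (a := fun m k => fst (Eh m k)). set (b := fun m k => snd (Eh m k)).
  assert (Pab : forall m, (m <= M)%nat -> periodic_grid K (a m) /\ periodic_grid K (b m) /\ periodic_grid K (Vh m)).
  { intros m0 Hm0. destruct (Hper m0 Hm0) as (P1 & P2 & P3).
    split; [|split]; try exact P3; intros k; unfold a, b; rewrite P1; reflexivity. }
  assert (Hcons : forall m, (m <= M)%nat ->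
     SZ K (edens dx (a m) (b m) (Nh m) (Vh m)) = SZ K (edens dx (a 0%nat) (b 0%nat) (Nh 0%nat) (Vh 0%nat)) /\
     SZ K (gg (a m) (b m)) = SZ K (gg (a 0%nat) (b 0%nat))).
  { induction m0 as [|m0 IH]; intros Hm0; [split; reflexivity|].
    destruct (IH ltac:(lia)) as [IH1 IH2].
    destruct (Pab m0 ltac:(lia)) as (Pa0 & Pb0 & PV0).
    destruct (Pab (S m0) Hm0) as (Pa1 & Pb1 & PV1).
    assert (St : SZ K (edens dx (a (S m0)) (b (S m0)) (Nh (S m0)) (Vh (S m0))) = SZ K (edens dx (a m0) (b m0) (Nh m0) (Vh m0)) /\
              SZ K (fun k => a (S m0) k ^2 + b (S m0) k ^2) = SZ K (fun k => a m0 k ^2 + b m0 k ^2)).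
    { apply step_energy with (dt := dt); try assumption; try lra.
      - intros k. destruct (Heq m0 k ltac:(lia)) as (H1 & _ & _).
        exact (proj1 (decodeE dx dt (Eh (S m0)) (Eh m0) (Nh (S m0)) (Nh m0) k ltac:(lra) ltac:(lra) H1)).
      - intros k. destruct (Heq m0 k ltac:(lia)) as (H1 & _ & _).
        exact (proj2 (decodeE dx dt (Eh (S m0)) (Eh m0) (Nh (S m0)) (Nh m0) k ltac:(lra) ltac:(lra) H1)).
      - intros k. destruct (Heq m0 k ltac:(lia)) as (_ & H2 & _).
        cbv zeta in H2.
        replace (Nh (S m0) k - Nh m0 k) with (dt * ((Nh (S m0) k - Nh m0 k)/dt)) by (field; lra).
        rewrite H2. reflexivity.
      - intros k. destruct (Heq m0 k ltac:(lia)) as (_ & _ & H3).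
        cbv zeta in H3. rewrite !Cmod_sq in H3.
        replace (Vh (S m0) k - Vh m0 k) with (dt * ((Vh (S m0) k - Vh m0 k)/dt)) by (field; lra).
        rewrite H3. unfold mu, a, b. cbv beta. lra. }
    unfold gg. destruct St as [St1 St2]. rewrite St1, St2. split; assumption. }
  assert (Hgrid : forall n, (1<=n<=K)%nat -> 0 <= IZR (Z.of_nat n) * dx /\ IZR (Z.of_nat n) * dx <= L).
  { intros n Hn. rewrite <- INR_IZR_INZ. split.
    - apply Rmult_le_pos; [apply pos_INR|lra].
    - rewrite <- HdxK, Rmult_comm. apply Rmult_le_compat_l; [lra|]. apply le_INR; lia. }
  assert (Hsucc : forall k, IZR (k+1)%Z * dx = IZR k * dx + dx) by (intros; rewrite plus_IZR; ring).
  assert (Ha0 : forall k, a 0%nat k = reE E 0 (IZR k * dx)) by (intros; unfold a, reE; rewrite HE0; reflexivity).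
  assert (Hb0 : forall k, b 0%nat k = imE E 0 (IZR k * dx)) by (intros; unfold b, imE; rewrite HE0; reflexivity).
  assert (Hg0 : forall n, (1<=n<=K)%nat -> gg (a 0%nat) (b 0%nat) (Z.of_nat n) <= BE2).
  { intros n Hn. destruct (Hgrid n Hn). unfold gg, BE2. rewrite Ha0, Hb0.
    pose proof (sq_le _ _ (HBR 0 (IZR (Z.of_nat n) * dx) ltac:(lra) ltac:(lra))).
    pose proof (sq_le _ _ (HBI 0 (IZR (Z.of_nat n) * dx) ltac:(lra) ltac:(lra))). lra. }
  assert (HP0 : dx * SZ K (gg (a 0%nat) (b 0%nat)) <= Pb).
  { unfold Pb. rewrite <- HdxK, Rmult_assoc. apply Rmult_le_compat_l; [lra|].
    rewrite <- Sn_const. apply Sn_le_loc. exact Hg0. }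
  assert (HH0 : dx * SZ K (edens dx (a 0%nat) (b 0%nat) (Nh 0%nat) (Vh 0%nat)) <= Hb).
  { unfold Hb. rewrite <- HdxK, Rmult_assoc. apply Rmult_le_compat_l; [lra|].
    rewrite <- Sn_const. apply Sn_le_loc. intros n Hn.
    pose proof (Hg0 n Hn) as Hgn. destruct (Hgrid n Hn) as [Hx1 Hx2].
    set (k := Z.of_nat n) in *. unfold edens, h0. unfold gg in Hgn.
    set (x := IZR k * dx) in *.
    assert (T1 : ((a 0%nat (k+1)%Z - a 0%nat k)/dx)^2 <= DR^2).
    { apply div_sq_le; [lra|]. rewrite !Ha0, Hsucc. fold x.
      pose proof (lip_smooth (reE E) 0 (L+1) DR sRe ltac:(intros y Hy; apply HDR; lra) x (x+dx) ltac:(lra) ltac:(lra) ltac:(lra)) as LL.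
      replace (x+dx-x) with dx in LL by ring. exact LL. }
    assert (T2 : ((b 0%nat (k+1)%Z - b 0%nat k)/dx)^2 <= DI^2).
    { apply div_sq_le; [lra|]. rewrite !Hb0, Hsucc. fold x.
      pose proof (lip_smooth (imE E) 0 (L+1) DI sIm ltac:(intros y Hy; apply HDI; lra) x (x+dx) ltac:(lra) ltac:(lra) ltac:(lra)) as LL.
      replace (x+dx-x) with dx in LL by ring. exact LL. }
    assert (T3 : ((Vh 0%nat (k+1)%Z - Vh 0%nat k)/dx)^2 <= (DV + 2 * Rabs CV)^2).
    { apply div_sq_le; [lra|].
      pose proof (HV0 (k+1)%Z) as R1. pose proof (HV0 k) as R2. rewrite Hsucc in R1. fold x in R1, R2.
      assert (LV : Rabs (V 0 (x+dx) - V 0 x) <= DV * (x + dx - x)).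
      { exact (lip_smooth V 0 (L+1) DV sV ltac:(intros y Hy; apply HDV; lra) x (x+dx) ltac:(lra) ltac:(lra) ltac:(lra)). }
      replace (x + dx - x) with dx in LV by ring.
      assert (CVdx : CV * dx^2 <= Rabs CV * dx).
      { pose proof (Rle_abs CV). pose proof (Rabs_pos CV).
        replace (CV*dx^2) with ((CV*dx)*dx) by ring. apply Rmult_le_compat_r; [lra|]. nra. }
      replace (Vh 0%nat (k+1)%Z - Vh 0%nat k) with ((V 0 (x+dx) - V 0 x) + (Vh 0%nat (k+1)%Z - V 0 (x+dx)) - (Vh 0%nat k - V 0 x)) by ring.
      eapply Rle_trans; [apply Rabs_triang|]. rewrite Rabs_Ropp.
      eapply Rle_trans; [apply Rplus_le_compat_r, Rabs_triang|]. lra. }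
    assert (T4 : /2 * Nh 0%nat k ^2 <= /2 * BN^2).
    { apply Rmult_le_compat_l; [lra|]. apply sq_le. rewrite HN0; fold x; apply HBN; lra. }
    assert (T5 : Nh 0%nat k * (a 0%nat k ^2 + b 0%nat k ^2) <= BN * BE2).
    { assert (HN1 : Rabs (Nh 0%nat k) <= BN) by (rewrite HN0; fold x; apply HBN; lra).
      pose proof (Rle_abs (Nh 0%nat k)). pose proof (pow2_ge_0 (a 0%nat k)). pose proof (pow2_ge_0 (b 0%nat k)).
      nra. }
    assert (T6 : /2 * ((Vh 0%nat (k+1)%Z - Vh 0%nat k)/dx)^2 <= /2*(DV + 2 * Rabs CV)^2) by lra.
    lra. }
  destruct (Pab m Hm) as (Pam & Pbm & _).
  destruct (Hcons m Hm) as [Cm1 Cm2].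
  assert (Hgm : forall n, (1<=n<=K)%nat -> gg (a m) (b m) (Z.of_nat n) <= G).
  { intros n Hn. pose proof (gmax K dx (a m) (b m) (Nh m) (Vh m) Pb Hb HK Hdx Pam Pbm
       ltac:(rewrite Cm2; exact HP0) ltac:(rewrite Cm1; exact HH0) n Hn) as HG.
    rewrite HdxK in HG. exact HG. }
  assert (Ht : 0 <= INR m * dt <= T).
  { split. apply Rmult_le_pos; [apply pos_INR|lra].
    unfold dt. replace (INR m * (T / INR M)) with (T * (INR m / INR M)) by (field; lra).
    rewrite <- (Rmult_1_r T) at 2. apply Rmult_le_compat_l; [lra|].
    apply (Rmult_le_reg_r (INR M)); [lra|]. unfold Rdiv. rewrite Rmult_assoc, Rinv_l by lra.
    rewrite Rmult_1_r, Rmult_1_l. apply le_INR; lia. }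
  assert (HEt : forall n, (1<=n<=K)%nat -> fst (Et (Z.of_nat n)) ^2 + snd (Et (Z.of_nat n)) ^2 <= BE2).
  { intros n Hn. destruct (Hgrid n Hn). unfold BE2, Et.
    pose proof (sq_le _ _ (HBR (INR m * dt) (IZR (Z.of_nat n) * dx) ltac:(lra) ltac:(lra))).
    pose proof (sq_le _ _ (HBI (INR m * dt) (IZR (Z.of_nat n) * dx) ltac:(lra) ltac:(lra))).
    unfold reE, imE, Re, Im in *. lra. }
  assert (HNt : forall n, (1<=n<=K)%nat -> Rabs (Nt (Z.of_nat n)) <= BN).
  { intros n Hn. destruct (Hgrid n Hn). unfold Nt. apply HBN; lra. }
  assert (HeE : forall n, (1<=n<=K)%nat -> fst (eE (Z.of_nat n)) ^2 + snd (eE (Z.of_nat n)) ^2 <= B2).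
  { intros n Hn. pose proof (HEt n Hn) as H1. pose proof (Hgm n Hn) as H2. unfold gg, a, b in H2.
    unfold eE, B2. simpl.
    set (x := fst (Eh m (Z.of_nat n))) in *. set (y := snd (Eh m (Z.of_nat n))) in *.
    set (p := fst (Et (Z.of_nat n))) in *. set (q := snd (Et (Z.of_nat n))) in *.
    pose proof (pow2_ge_0 (x+p)). pose proof (pow2_ge_0 (y+q)).
    replace ((x + - p)^2 + (y + - q)^2) with (2*(x^2+y^2) + 2*(p^2+q^2) - ((x+p)^2 + (y+q)^2)) by ring.
    lra. }
  assert (Hgn : forall v, gnorm K dx v ^2 = dx * SZ K (fun k => fst (v k) ^2 + snd (v k) ^2)).
  { intros v. unfold gnorm, Re. rewrite pow2_sqrt.
    - rewrite ip_fst. f_equal. unfold SZ. apply Sn_ext_loc. intros; ring.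
    - rewrite ip_fst. apply Rmult_le_pos; [lra|]. apply Sn_nonneg. intros n _.
      pose proof (pow2_ge_0 (fst (v (Z.of_nat n)))). pose proof (pow2_ge_0 (snd (v (Z.of_nat n)))). nra. }
  assert (HsA : snd A = 0).
  { unfold A, Cplus. cbn [snd RtoC]. rewrite ip_snd. unfold SZ.
    rewrite (Sn_ext_loc K _ (fun _ => 0)). rewrite Sn_const. ring.
    intros n _. unfold cgrid, RtoC. simpl. ring. }
  assert (HA : Cmod A = Rabs (fst A)).
  { destruct A as [x y]. simpl in HsA. subst y. rewrite <- Cmod_R. reflexivity. }
  rewrite HA, !Hgn.
  unfold A, Cplus. cbn [fst RtoC]. unfold Re. rewrite !ip_fst.
  set (C4 := B2 / 2 + BN + BE2 + 1).
  match goal with |- Rabs (dx * SZ K ?f1 + 2 * (dx * SZ K ?f2)) <= 3/2 * (dx * SZ K ?g1) + _ * (dx * SZ K ?g2) =>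
    replace (dx * SZ K f1 + 2 * (dx * SZ K f2)) with (dx * SZ K (fun k => f1 k + 2 * f2 k)) by (unfold SZ; cbv beta; rewrite Sn_plus, Sn_scal; ring);
    replace (3/2 * (dx * SZ K g1) + C4 * (dx * SZ K g2)) with (dx * SZ K (fun k => 3/2 * g1 k + C4 * g2 k)) by (unfold SZ; cbv beta; rewrite Sn_plus, !Sn_scal; ring)
  end.
  rewrite Rabs_mult, (Rabs_pos_eq dx) by lra. apply Rmult_le_compat_l; [lra|]. unfold SZ.
  eapply Rle_trans; [apply Sn_abs|]. apply Sn_le_loc. intros n Hn.
  pose proof (final_pt (fst (eE (Z.of_nat n))) (snd (eE (Z.of_nat n))) (fst (Et (Z.of_nat n))) (snd (Et (Z.of_nat n)))
     (eN (Z.of_nat n)) (Nt (Z.of_nat n)) B2 BE2 BN (HeE n Hn) (HEt n Hn) (HNt n Hn)) as FP.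
  fold C4 in FP.
  unfold cgrid, RtoC, Cmult. cbn [fst snd]. rewrite Cmod_sq.
  match goal with |- Rabs ?X <= ?Y => replace X with ((eN (Z.of_nat n) + Nt (Z.of_nat n)) * (fst (eE (Z.of_nat n)) ^ 2 + snd (eE (Z.of_nat n)) ^ 2) +
           2 * (eN (Z.of_nat n) * (fst (eE (Z.of_nat n)) * fst (Et (Z.of_nat n)) + snd (eE (Z.of_nat n)) * snd (Et (Z.of_nat n))))) by ring end.
  lra.
Qed.
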